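(* Let $Y\in\mathbb R^{m\times n}$, $0<c<1$ and $t>0$, and put $R_c:=\frac{1}{m+n}\log(1/c)$. (a) If $\delta(\exp(a)x_Y)<c^{\frac1{m+n}}$ for some $a\in C_{R_c}(t)$, then there is $a'\in C_0(t)$ with $\delta(\exp(a')x_Y)<c^{\frac{1}{m(m+n)}}$. (b) If $\delta(\exp(a)x_Y)<c^{\frac{m+n-1}{m(m+n)}}$ for some $a\in C_0(t)$, then there is $a'\in C_{R_c}\big(t-\frac{n-1}{m+n}\log c\big)$ with $\delta(\exp(a')x_Y)<c^{\frac1{m+n}}$.
   Context: $m,n\ge1$; $\mathfrak a=\{\operatorname{diag}(a_1,\dots,a_{m+n}):\sum a_i=0\}$, $G=\operatorname{SL}_{m+n}(\mathbb R)$ acting on unimodular lattices in $\mathbb R^{m+n}$. For a constant $R\in\mathbb R$ and $t\ge0$: $C_R(t):=\{a\in\mathfrak a:a_1+\dots+a_m=-(a_{m+1}+\dots+a_{m+n})=t,\ a_i>-R\ (1\le i\le m),\ a_{m+j}<-R\ (1\le j\le n)\}$; $C_0(t)$ is the case $R=0$. For a lattice $x$, $\delta(x):=\min\{\|\boldsymbol v\|_\infty:\boldsymbol v\in x\setminus\{0\}\}$. $x_Y:=\begin{pmatrix}I_m&Y\\0&I_n\end{pmatrix}\mathbb Z^{m+n}$. *)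

(* Defs.v *)
From HB Require Import structures.
From mathcomp Require Import all_boot all_order all_algebra.
From mathcomp Require Import all_classical all_reals all_analysis.
Set Implicit Arguments. Unset Strict Implicit. Unset Printing Implicit Defensive.
Import Order.TTheory GRing.Theory Num.Theory.
Local Open Scope ring_scope.
Local Open Scope classical_set_scope.

Section Defs.
Variable R : realType.

(* matrix of x_Y = [[I_m, Y],[0, I_n]] ; x_Y = xYmat Y *m Z^{m+n} *)
Definition xYmat (m n : nat) (Y : 'M[R]_(m, n)) : 'M[R]_(m + n) :=
  block_mx 1%:M Y 0 1%:M.

Definition expdiag (k : nat) (a : 'rV[R]_k) : 'M[R]_k := diag_mx (map_mx expR a).

Definition supnorm (k : nat) (w : 'cV[R]_k) : R := \big[Num.max/0]_(i < k) `|w i 0|.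

Definition delta (k : nat) (g : 'M[R]_k) : R :=
  inf [set supnorm (g *m map_mx intr v) | v in [set v : 'cV[int]_k | v != 0]].

Definition Ccone (m n : nat) (Rr t : R) (a : 'rV[R]_(m + n)) : Prop :=
  [/\ \sum_(i < m) a 0 (lshift n i) = t,
      \sum_(j < n) a 0 (rshift m j) = - t,
      (forall i : 'I_m, - Rr < a 0 (lshift n i)) &
      (forall j : 'I_n, a 0 (rshift m j) < - Rr)].

End Defs.

(* Main.v *)
Require Import Defs.
From HB Require Import structures.
From mathcomp Require Import all_boot all_order all_algebra.
From mathcomp Require Import all_classical all_reals all_analysis.
From mathcomp Require Import ring lra.
Import Order.TTheory GRing.Theory Num.Theory.
Local Open Scope ring_scope.
Section Dir.
Variable R : realType.

Definition hit {M : nat} (x b : R) (g : 'I_M) : bool :=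
  `[< exists j : int, 0 < (nat_of_ord g)%:R / M%:R - x + j%:~R <= b >].

Lemma cnt1 (M : nat) (x b : R) : (0 < M)%N -> 0 < b <= 1 ->
  (Num.truncn (M%:R * b) <= #|[pred g : 'I_M | hit x b g]|)%N.
Proof.
move=> M0 /andP[b0 b1].
have hM : (0 : R) < M%:R by rewrite ltr0n.
set L := Num.truncn (M%:R * b).
have hL : (L%:R : R) <= M%:R * b by rewrite truncn_le mulr_ge0 // ltW.
have LM : (L <= M)%N.
  by rewrite -(ler_nat R); apply: (le_trans hL); rewrite ler_piMr // ltW.
set s := (Num.truncn `|x|).+1.
have hs : `|x| < s%:R := truncnS_gt _.
set y := x + s%:R.
have y0 : 0 <= y.
  by rewrite /y; have := ler_norm (- x); rewrite normrN; lra.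
set c0 := (Num.truncn (M%:R * y)).+1.
have hc0 : ((Num.truncn (M%:R * y))%:R <= M%:R * y < c0%:R)%R.
  by rewrite /c0 truncnS_gt truncn_le mulr_ge0 // ltW.
pose f (l : 'I_L) : 'I_M := Ordinal (ltn_pmod (c0 + l) M0).
have finj : injective f.
  move=> l1 l2 /(congr1 val) /= /eqP; rewrite eqn_modDl.
  rewrite !modn_small; first by move=> /eqP h; apply: val_inj.
    exact: leq_trans (ltn_ord l2) LM.
  exact: leq_trans (ltn_ord l1) LM.
rewrite -{1}(card_ord L) -(card_imset 'I_L finj).
apply: subset_leq_card; apply/fintype.subsetP => g /imsetP [l _ ->].
rewrite inE /= /hit; apply/asboolP; apply/asboolP.
exists (((c0 + l) %/ M)%:Z - s%:Z).
have E : (((c0 + l) %% M)%N%:R : R) = (c0 + l)%N%:R - ((c0 + l) %/ M)%N%:R * M%:R.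
  by rewrite {2}(divn_eq (c0 + l) M) natrD natrM; ring.
rewrite E intrB.
rewrite -!pmulrn.
set Q := (((c0 + l) %/ M)%N%:R : R).
have -> : ((c0 + l)%N%:R - Q * M%:R) / M%:R - x + (Q - s%:R) =
          ((c0 + l)%N%:R - M%:R * y) / M%:R.
  by rewrite /y; field; rewrite gt_eqF.
have hl : (l%:R + 1 : R) <= L%:R by rewrite natr1 ler_nat ltn_ord.
rewrite natrD; apply/andP; split.
  apply: divr_gt0 => //; move: hc0; rewrite /c0 -natr1.
  have : (0 : R) <= l%:R by [].
  lra.
rewrite ler_pdivrMr //.
move: hc0 hl hL; rewrite /c0 -natr1; lra.
Qed.
Lemma prod_sub_ge (I : Type) (r : seq I) (b : I -> R) (d : R) :
  0 <= d -> (forall i, d <= b i <= 1) ->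
  [/\ 0 <= \prod_(i <- r) b i <= 1, 0 <= \prod_(i <- r) (b i - d) &
   \prod_(i <- r) b i - (size r)%:R * d <= \prod_(i <- r) (b i - d)].
Proof.
move=> d0 hb; elim: r => [|x r [/andP[p0 p1] q0 IH]].
  by rewrite !big_nil /= mul0r subr0 ler01 lexx.
rewrite !big_cons /=.
have /andP[bx0 bx1] := hb x.
set Pb := \prod_(i <- r) b i in p0 p1 IH *.
set Pd := \prod_(i <- r) (b i - d) in q0 IH *.
have h1 : 0 <= b x - d by lra.
split.
- by rewrite mulr_ge0 ?mulr_ile1 //; lra.
- by rewrite mulr_ge0.
have h2 : (b x - d) * (Pb - (size r)%:R * d) <= (b x - d) * Pd by rewrite ler_wpM2l.
have hs : (0 : R) <= (size r)%:R by [].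
rewrite -natr1.
have h3 : (b x - d) * ((size r)%:R * d) <= (size r)%:R * d.
  by rewrite ler_piMl ?mulr_ge0 //; lra.
have h4 : d * Pb <= d by rewrite ler_piMr.
apply: le_trans h2.
have -> : (b x - d) * (Pb - (size r)%:R * d) =
  b x * Pb - d * Pb - (b x - d) * ((size r)%:R * d) by ring.
lra.
Qed.

Lemma collide (G I : finType) (H : I -> pred G) :
  (#|G| < \sum_k #|H k|)%N -> exists s k1 k2, [/\ k1 != k2, s \in H k1 & s \in H k2].
Proof.
move=> hlt; apply: contrapT => hno; move: hlt; apply/negP; rewrite -leqNgt.
have E : (\sum_k #|H k| = \sum_s #|[pred k | s \in H k]|)%N.
  rewrite (eq_bigr (fun k => \sum_s (if s \in H k then 1 else 0))%N); last first.
    by move=> k _; rewrite -sum1_card big_mkcond.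
  rewrite exchange_big; apply: eq_bigr => s _.
  by rewrite -sum1_card [RHS]big_mkcond /=; apply: eq_bigr => k _; rewrite inE.
rewrite E -sum1_card; apply: leq_sum => s _.
apply/card_le1_eqP => k1 k2; rewrite !inE => h1 h2.
apply/eqP; apply: contraT => hne; case: hno; exists s, k1, k2; split=> //; by rewrite eq_sym.
Qed.


Lemma dirichlet (T : finType) (th bt : T -> R) (K : R) :
  (forall i, 0 < bt i <= 1) -> 1 < K * \prod_i bt i ->
  exists k : nat, [/\ (0 < k)%N, k%:R < K &
    forall i, exists z : int, `|k%:R * th i - z%:~R| < bt i].
Proof.
move=> hb hK.
set P := \prod_i bt i in hK *.
have P0 : 0 < P by apply: prodr_gt0 => i _; case/andP: (hb i).
have Pb : forall i, P <= bt i.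
  move=> i; rewrite /P (bigD1 i) //=.
  have /andP[b0 b1] := hb i.
  apply: ler_piMr; first exact: ltW.
  have := @ler_prod R T (index_enum T) (fun j => j != i) bt (fun _ => 1).
  rewrite big1_eq; apply=> j _; have /andP[c0 c1] := hb j.
  by rewrite c1 ltW.
have K0 : 0 < K.
  have : 0 < K * P by apply: lt_trans hK.
  by rewrite pmulr_lgt0.
have hKP : P^-1 < K by rewrite -div1r ltr_pdivrMr.
set K' := (K + P^-1) / 2.
have K'P : 1 < K' * P.
  have -> : K' * P = (K * P + 1) / 2.
    by rewrite /K'; field; rewrite gt_eqF.
  lra.
have K'0 : 0 <= K'.
  have Pi0 : 0 < P^-1 by rewrite invr_gt0.
  rewrite /K'; lra.
have K'K : K' < K by rewrite /K'; lra.
set N := (Num.truncn K').+1.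
have hN : K' < N%:R := truncnS_gt K'.
have hN1 : (Num.truncn K')%:R <= K' by rewrite truncn_le.
have NP : 1 < N%:R * P.
  by apply: lt_le_trans K'P _; rewrite ler_pM2r // ltW.
have N0 : (0 : R) < N%:R by rewrite ltr0n.
set eps := P - N%:R^-1.
have eps0 : 0 < eps.
  by rewrite /eps subr_gt0 -div1r ltr_pdivrMr // mulrC.
set M := (Num.truncn ((#|T|%:R + 1) / eps)).+1.
have hM : (#|T|%:R + 1) / eps < M%:R := truncnS_gt _.
have hMe : #|T|%:R + 1 < M%:R * eps by rewrite -ltr_pdivrMr.
have M0 : (0 < M)%N by [].
have hMR : (0 : R) < M%:R by rewrite ltr0n.
have hT0 : (0 : R) <= #|T|%:R by [].
have epsP : eps <= P by rewrite /eps lerBlDr lerDl invr_ge0 ltW.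
have Mb : forall i, 1 <= M%:R * bt i.
  move=> i; have h1 : M%:R * eps <= M%:R * bt i.
    by rewrite ler_pM2l //; apply: le_trans epsP (Pb i).
  lra.
pose L i := Num.truncn (M%:R * bt i).
have hL : forall i, M%:R * bt i - 1 <= (L i)%:R.
  by move=> i; have := truncnS_gt (M%:R * bt i); rewrite -natr1 /L; lra.
have key : (M ^ #|T| < N * \prod_i L i)%N.
  rewrite -(ltr_nat R) natrM natrX natr_prod.
  have h1 : \prod_i (M%:R * bt i - 1) <= \prod_i (L i)%:R.
    apply: ler_prod => i _; rewrite hL andbT; have := Mb i; lra.
  have h2 : \prod_i (M%:R * bt i - 1) = M%:R ^+ #|T| * \prod_i (bt i - M%:R^-1).
    rewrite -prodr_const -big_split /=; apply: eq_bigr => i _.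
    by field; rewrite gt_eqF.
  have Minv0 : 0 <= (M%:R : R)^-1 by rewrite invr_ge0 ltW.
  have hb' : forall i, M%:R^-1 <= bt i <= 1.
    move=> i; have /andP[_ ->] := hb i; rewrite andbT.
    rewrite -[M%:R^-1]mul1r ler_pdivrMr // mulrC; exact: Mb.
  have [_ _ h3] := prod_sub_ge _ (enum T) bt _ Minv0 hb'.
  have h3' : P - #|T|%:R * M%:R^-1 <= \prod_i (bt i - M%:R^-1).
    by move: h3; rewrite -cardT enumT.
  have h4 : #|T|%:R * M%:R^-1 < eps.
    by rewrite -[X in X < _]/(#|T|%:R / M%:R) ltr_pdivrMr // mulrC; lra.
  have h5 : 1 < N%:R * (P - #|T|%:R * M%:R^-1).
    have : N%:R^-1 < P - #|T|%:R * M%:R^-1 by rewrite /eps in h4; lra.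
    by rewrite -div1r ltr_pdivrMr // mulrC.
  have hMT : (0 : R) < M%:R ^+ #|T| by rewrite exprn_gt0.
  apply: lt_le_trans (_ : N%:R * (M%:R ^+ #|T| * \prod_i (bt i - M%:R^-1)) <= _).
    rewrite mulrCA -[X in X < _]mulr1 ltr_pM2l //.
    apply: lt_le_trans h5 _; rewrite ler_pM2l //.
  by rewrite -h2 ler_pM2l.
pose H (k : 'I_N) : pred {ffun T -> 'I_M} :=
  [pred s | s \in family (fun i => [pred g : 'I_M | hit (k%:R * th i) (bt i) g])].
have cardH : forall k, (\prod_i L i <= #|H k|)%N.
  move=> k; rewrite /H card_family foldrE big_map.
  rewrite (_ : \prod_i L i = \prod_(i <- enum T) L i); last first.
    by rewrite big_enum; apply: eq_bigl => i; rewrite inE.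
  apply: leq_prod => i _; exact: cnt1.
have hsum : (#|{ffun T -> 'I_M}| < \sum_k #|H k|)%N.
  rewrite card_ffun card_ord; apply: leq_trans key _.
  rewrite -[in X in (X * _)%N](card_ord N) -sum_nat_const.
  by apply: leq_sum => k _; exact: cardH.
have [s [k1 [k2 [hne hs1 hs2]]]] := @collide _ _ _ hsum.
have main : forall a1 a2 : 'I_N, (a1 < a2)%N -> s \in H a1 -> s \in H a2 ->
  exists k : nat, [/\ (0 < k)%N, k%:R < K &
    forall i, exists z : int, `|k%:R * th i - z%:~R| < bt i].
  move=> a1 a2 lt12 h1 h2.
  exists (a2 - a1)%N; split.
  - by rewrite subn_gt0.
  - apply: le_lt_trans K'K; apply: le_trans hN1; rewrite ler_nat.
    apply: leq_trans (leq_subr a1 a2) _; rewrite -ltnS; exact: ltn_ord.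
  move=> i; move: h1 h2; rewrite !inE => /familyP/(_ i) h1 /familyP/(_ i) h2.
  move: h1 h2 => /asboolP [j1 hj1] /asboolP [j2 hj2].
  exists (j2 - j1); rewrite natrB ?(ltnW lt12) // intrB ltr_norml.
  rewrite mulrBl; move: hj1 hj2; lra.
case: (ltngtP k1 k2) => [lt12|lt21|eq12].
- exact: main lt12 hs1 hs2.
- exact: main lt21 hs2 hs1.
- by move: hne; rewrite (val_inj eq12) eqxx.
Qed.
End Dir.

Section Lat.
Variable R : realType.
Variables m n : nat.
Variable Y : 'M[R]_(m, n).

Definition zv (v : 'cV[int]_(m + n)) : 'cV[R]_(m + n) := xYmat Y *m map_mx intr v.

Lemma zvE v : zv v = col_mx (usubmx (map_mx intr v) + Y *m dsubmx (map_mx intr v))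
                             (dsubmx (map_mx intr v)).
Proof.
by rewrite /zv /xYmat -{1}(vsubmxK (map_mx intr v)) mul_block_col !mul1mx mul0mx add0r.
Qed.

Lemma zv_l v i : zv v (lshift n i) 0 =
  (v (lshift n i) 0)%:~R + \sum_j Y i j * (v (rshift m j) 0)%:~R.
Proof. by rewrite zvE col_mxEu !mxE; congr (_ + _); apply: eq_bigr => j _; rewrite !mxE. Qed.

Lemma zv_r v j : zv v (rshift m j) 0 = (v (rshift m j) 0)%:~R.
Proof. by rewrite zvE col_mxEd !mxE. Qed.

Lemma supnorm_ge0 k (w : 'cV[R]_k) : 0 <= supnorm w.
Proof.
rewrite /supnorm; apply: (big_ind (fun x => 0 <= x)) => //.
by move=> x y hx hy; rewrite le_max hx.
Qed.

Lemma gvE (a : 'rV[R]_(m + n)) v k :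
  `|((expdiag a *m xYmat Y) *m map_mx intr v) k 0| = expR (a 0 k) * `|zv v k 0|.
Proof.
by rewrite -mulmxA -/(zv v) /expdiag mul_diag_mx !mxE normrM gtr0_norm ?expR_gt0.
Qed.

Lemma small_delta (a : 'rV[R]_(m + n)) (B : R) (v : 'cV[int]_(m + n)) :
  0 < B -> v != 0 -> (forall k, expR (a 0 k) * `|zv v k 0| < B) ->
  delta (expdiag a *m xYmat Y) < B.
Proof.
move=> B0 v0 hv; rewrite /delta.
have lb : has_lbound [set supnorm (expdiag a *m xYmat Y *m map_mx intr v) |
            v in [set v : 'cV[int]_(m + n) | v != 0]].
  by exists 0 => y [w _ <-]; apply: supnorm_ge0.
have h1 := ge_inf lb.
apply: (le_lt_trans (h1 (supnorm (expdiag a *m xYmat Y *m map_mx intr v)) _)).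
  by exists v.
rewrite /supnorm; apply: bigmax_lt => // k _; rewrite gvE; exact: hv.
Qed.

Lemma delta_small (a : 'rV[R]_(m + n)) (B : R) : (0 < m)%N ->
  delta (expdiag a *m xYmat Y) < B ->
  exists v : 'cV[int]_(m + n), v != 0 /\ forall k, expR (a 0 k) * `|zv v k 0| < B.
Proof.
move=> m0; rewrite /delta => hd.
have ne : ([set supnorm (expdiag a *m xYmat Y *m map_mx intr v) |
            v in [set v : 'cV[int]_(m + n) | v != 0]] !=set0)%classic.
  exists (supnorm (expdiag a *m xYmat Y *m map_mx intr (const_mx 1))).
  exists (const_mx 1) => //=.
  apply/eqP => /matrixP /(_ (lshift n (Ordinal m0)) 0); rewrite !mxE.
  by move/eqP; rewrite oner_eq0.
have [y [v v0 <-] hy] := inf_lt ne hd.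
exists v; split => // k; rewrite -gvE.
apply: le_lt_trans hy; rewrite /supnorm; exact: (le_bigmax _ (fun i => `|(expdiag a *m xYmat Y *m map_mx intr v) i 0|) k).
Qed.

Lemma int_ge1 (x : int) : x != 0 -> (1 : R) <= `|x%:~R|.
Proof. by move=> x0; apply: norm_intr_ge1; rewrite ?intr_int // intr_eq0. Qed.

Lemma q_nonzero (a : 'rV[R]_(m + n)) (B : R) (v : 'cV[int]_(m + n)) :
  (forall i, B <= expR (a 0 (lshift n i))) -> v != 0 ->
  (forall k, expR (a 0 k) * `|zv v k 0| < B) ->
  exists j0, v (rshift m j0) 0 != 0.
Proof.
move=> hB v0 hv.
case: (pselect (exists j0, v (rshift m j0) 0 != 0)) => // hno.
have hq : forall j, v (rshift m j) 0 = 0.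
  by move=> j; apply/eqP; apply: contraT => h; case: hno; exists j.
case: (pselect (exists k, v k 0 != 0)) => [[k hk]|hno2]; last first.
  case/negP: v0; apply/eqP/matrixP => i j; rewrite ord1 mxE; apply/eqP.
  by apply: contraT => h; case: hno2; exists i.
move: hk; rewrite -(fintype.splitK k); case: (fintype.split k) => [i|j] /= hk; last by rewrite hq eqxx in hk.
have := hv (lshift n i); rewrite zv_l.
rewrite (eq_bigr (fun _ => 0)); last by move=> j _; rewrite hq mulr0.
rewrite big1_eq addr0 => h.
have := int_ge1 _ hk; have := hB i; have := expR_gt0 (a 0 (lshift n i)).
move: h; set e := expR _; set u := `|_|; nra.
Qed.

End Lat.

Lemma partA (R : realType) (m n : nat) (hm : (0 < m)%N) (hn : (0 < n)%N)
  (Y : 'M[R]_(m, n)) (c t : R) (hc0 : 0 < c) (hc1 : c < 1) (ht : 0 < t) :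
  let Rc := (m + n)%:R^-1 * ln c^-1 in
  ((exists a, Ccone Rc t a /\ delta (expdiag a *m xYmat Y) < c `^ ((m + n)%:R^-1)) ->
     exists a', Ccone 0 t a' /\
       delta (expdiag a' *m xYmat Y) < c `^ ((m * (m + n))%:R^-1)).
Proof.
move=> Rc [a [[sa sq ha hq] hd]].
set lc := ln c.
have lc0 : lc < 0 by apply: ln_lt0; rewrite hc0 hc1.
have hmn : (0:R) < (m + n)%:R by rewrite ltr0n addn_gt0 hm.
have hm0 : (0:R) < m%:R by rewrite ltr0n.
have RcE : Rc = - lc / (m + n)%:R by rewrite /Rc lnV ?posrE // mulrC.
have Rc0 : 0 < Rc by rewrite RcE divr_gt0 // oppr_gt0.
have E1 : c `^ ((m + n)%:R^-1) = expR (- Rc).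
  by rewrite /powR gt_eqF // RcE -/lc mulNr opprK mulrC.
have E2 : c `^ ((m * (m + n))%:R^-1) = expR (- (Rc / m%:R)).
  rewrite /powR gt_eqF // RcE -/lc natrM; congr expR.
  by field; rewrite -natrD (lt0r_neq0 hmn) (lt0r_neq0 hm0).
rewrite E1 in hd; rewrite E2.
set e2 := expR (- (Rc / m%:R)).
have [v [v0 hv]] := @delta_small _ _ _ Y _ _ hm hd.
have [j0 hj0] : exists j0, v (rshift m j0) 0 != 0.
  apply: (@q_nonzero _ _ _ Y a _ v _ v0 hv) => i.
  by rewrite ler_expR; have := ha i; lra.
set z := zv R m n Y v.
set s0 := \big[Num.max/0]_k (expR (a 0 k) * `|z k 0|).
have s0ge : forall k, expR (a 0 k) * `|z k 0| <= s0.
  by move=> k; exact: (le_bigmax _ (fun k => expR (a 0 k) * `|z k 0|) k).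
have s0lt : s0 < expR (- Rc).
  apply: bigmax_lt; first exact: expR_gt0.
  by move=> k _; exact: hv.
have s0pos : 0 < s0.
  apply: lt_le_trans (s0ge (rshift m j0)).
  by rewrite mulr_gt0 ?expR_gt0 // normr_gt0 /z zv_r intr_eq0.
set kap := expR (- Rc) / s0.
have kap1 : 1 < kap by rewrite /kap ltr_pdivlMr // mul1r.
have lk0 : 0 < ln kap := ln_gt0 kap1.
have lkE : ln kap = - Rc - ln s0.
  by rewrite /kap ln_div ?posrE ?expR_gt0 // expRK.
pose bad := [pred i : 'I_m | a 0 (lshift n i) <= 0].
set b := #|bad|.
have [i0 gi0] : exists i0, ~~ bad i0.
  apply: contrapT => hno.
  have hb : forall i, bad i by move=> i; apply/negPn/negP => h; apply: hno; exists i.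
  have : \sum_i a 0 (lshift n i) <= 0 by apply: sumr_le0 => i _; exact: hb.
  by rewrite sa; lra.
have bm : (b < m)%N.
  have : (b <= #|predC1 i0|)%N.
    apply: subset_leq_card; apply/fintype.subsetP => i; rewrite !inE => hi.
    by apply/eqP => e; move: gi0; rewrite -e inE hi.
  by rewrite cardC1 card_ord => h; apply: leq_ltn_trans h _; rewrite ltn_predL.
set mu := Num.min (ln kap) t.
have mu0 : 0 < mu by rewrite lt_min lk0 ht.
have mu1 : mu <= ln kap by rewrite ge_min lexx.
have mu2 : mu <= t by rewrite ge_min lexx orbT.
set eta := mu / m%:R.
have eta0 : 0 < eta by rewrite divr_gt0.
have hmeta : m%:R * eta = mu by rewrite /eta; field; apply: lt0r_neq0.
have bR : (b%:R : R) + 1 <= m%:R by rewrite natr1 ler_nat.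
have hbeta : b%:R * eta <= (m%:R - 1) * eta by apply: ler_wpM2r; [exact: ltW | lra].
have bt1 : b%:R * eta < ln kap by lra.
have bt2 : b%:R * eta < t by lra.
set SG := \sum_(i | ~~ bad i) a 0 (lshift n i).
have hsplit : \sum_i a 0 (lshift n i) = \sum_(i | bad i) a 0 (lshift n i) + SG.
  by rewrite (bigID bad).
have hbadsum : \sum_(i | bad i) a 0 (lshift n i) <= 0 by apply: sumr_le0.
have SGt : t <= SG by move: hsplit; rewrite sa; lra.
have SG0 : 0 < SG by lra.
set mu' := (t - b%:R * eta) / SG.
have mu'0 : 0 < mu' by rewrite divr_gt0 //; lra.
have mu'1 : mu' <= 1.
  by rewrite ler_pdivrMr // mul1r; have := mulr_ge0 (ler0n R b) (ltW eta0); lra.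
pose gam := expR (- (eta + Rc / m%:R)).
pose bt := fun i : 'I_m => if bad i then gam else 1.
have hbt : forall i, 0 < bt i <= 1.
  move=> i; rewrite /bt; case: ifP => _; last by rewrite ltr01 lexx.
  rewrite expR_gt0 expR_le1 /=; have : 0 < Rc / m%:R by rewrite divr_gt0.
  lra.
have hprod : \prod_i bt i = gam ^+ b.
  by rewrite /bt -big_mkcond prodr_const.
set K := e2 / s0.
have hK : 1 < K * \prod_i bt i.
  rewrite hprod /gam -expRM_natl /K /e2 -[s0]lnK ?posrE // -expRN -!expRD expR_gt1.
  have h1 : b%:R * (Rc / m%:R) <= (m%:R - 1) * (Rc / m%:R).
    by apply: ler_wpM2r; [rewrite ltW // divr_gt0 | lra].
  have h2 : m%:R * (Rc / m%:R) = Rc by field; apply: lt0r_neq0.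
  rewrite mulrN mulrDr; lra.
have [k [k0 kK hk]] := @dirichlet R 'I_m (fun i => z (lshift n i) 0) bt K hbt hK.
have [nf hnf] := fin_all_exists hk.
pose w : 'cV[int]_(m + n) := col_mx (\col_i (if bad i then nf i else 0)) 0.
pose u : 'cV[int]_(m + n) := k%:Z *: v - w.
have uL : forall i, u (lshift n i) 0 = k%:Z * v (lshift n i) 0 - (if bad i then nf i else 0).
  by move=> i; rewrite !mxE (unsplitK (inl i : 'I_m + 'I_n)) !mxE.
have uR : forall j, u (rshift m j) 0 = k%:Z * v (rshift m j) 0.
  by move=> j; rewrite !mxE (unsplitK (inr j : 'I_m + 'I_n)) !mxE subr0.
have zuL : forall i, zv R m n Y u (lshift n i) 0 =
    k%:R * z (lshift n i) 0 - (if bad i then nf i else 0)%:~R.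
  move=> i; rewrite !zv_l uL.
  rewrite (eq_bigr (fun j => k%:R * (Y i j * (v (rshift m j) 0)%:~R))); last first.
    by move=> j _; rewrite uR intrM -pmulrn mulrCA.
  by rewrite -mulr_sumr intrB intrM -pmulrn; ring.
have zuR : forall j, zv R m n Y u (rshift m j) 0 = k%:R * z (rshift m j) 0.
  by move=> j; rewrite !zv_r uR intrM -pmulrn.
have u0 : u != 0.
  apply/eqP => /matrixP /(_ (rshift m j0) 0); rewrite uR mxE => /eqP.
  rewrite mulf_eq0 (negbTE hj0) orbF => /eqP [] k00; by rewrite k00 in k0.
have Ks0 : K * s0 = e2 by rewrite /K divfK // lt0r_neq0.
have hkey : forall x, 0 <= x -> x <= s0 -> k%:R * x < e2.
  move=> x x0 xs; rewrite -Ks0; apply: le_lt_trans (_ : k%:R * s0 < _).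
    by rewrite ler_wpM2l.
  by rewrite ltr_pM2r.
exists (row_mx (\row_i (if bad i then eta else mu' * a 0 (lshift n i)))
               (\row_j a 0 (rshift m j))).
split; first split.
- rewrite (eq_bigr (fun i => if bad i then eta else mu' * a 0 (lshift n i))); last first.
    by move=> i _; rewrite row_mxEl mxE.
  rewrite (bigID bad) /=.
  rewrite (eq_bigr (fun _ => eta)); last by move=> i ->.
  rewrite [X in _ + X](eq_bigr (fun i => mu' * a 0 (lshift n i))); last by move=> i hi; rewrite (negbTE hi).
  have -> : \sum_(i < m | a 0 (lshift n i) <= 0) eta = b%:R * eta.
    by rewrite sumr_const mulr_natl.
  rewrite -mulr_sumr -/SG /mu'.
  by field; apply: lt0r_neq0.
- rewrite (eq_bigr (fun j => a 0 (rshift m j))) // => j _.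
  by rewrite row_mxEr mxE.
- move=> i; rewrite row_mxEl mxE oppr0; case: ifP => hb //.
  by rewrite mulr_gt0 // ltNge; apply/negbT.
- by move=> j; rewrite row_mxEr mxE oppr0; have := hq j; lra.
apply: (@small_delta _ _ _ Y _ _ u) => //; first exact: expR_gt0.
move=> x; rewrite -(fintype.splitK x); case: (fintype.split x) => [i|j] /=.
- rewrite row_mxEl mxE zuL; case hb: (bad i).
  + have := hnf i; rewrite /bt hb /gam => h.
    have -> : e2 = expR eta * expR (- (eta + Rc / m%:R)).
      by rewrite -expRD /e2; congr expR; ring.
    by move: hb; rewrite /bad inE => ->; rewrite ltr_pM2l ?expR_gt0.
  + rewrite mulr0z subr0 normrM normr_nat.
    have ai0 : 0 < a 0 (lshift n i) by rewrite ltNge; move/negbT: hb.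
    apply: le_lt_trans (_ : k%:R * (expR (a 0 (lshift n i)) * `|z (lshift n i) 0|) < _);
      last by apply: hkey; [rewrite mulr_ge0 ?expR_ge0 | exact: s0ge].
    rewrite mulrCA ler_wpM2l //; apply: ler_wpM2r => //.
    by move: hb; rewrite /bad inE => ->; rewrite ler_expR ler_piMl // ltW.
- rewrite row_mxEr mxE zuR normrM normr_nat mulrCA.
  by apply: hkey; [rewrite mulr_ge0 ?expR_ge0 | exact: s0ge].
Qed.

Lemma partB (R : realType) (m n : nat) (hm : (0 < m)%N) (hn : (0 < n)%N)
  (Y : 'M[R]_(m, n)) (c t : R) (hc0 : 0 < c) (hc1 : c < 1) (ht : 0 < t) :
  let Rc := (m + n)%:R^-1 * ln c^-1 in
  ((exists a, Ccone 0 t a /\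
       delta (expdiag a *m xYmat Y) < c `^ ((m + n - 1)%:R / (m * (m + n))%:R)) ->
     exists a', Ccone Rc (t - (n%:R - 1) / (m + n)%:R * ln c) a' /\
       delta (expdiag a' *m xYmat Y) < c `^ ((m + n)%:R^-1)).
Proof.
move=> Rc [a [[sa sq ha hq] hd]].
set lc := ln c.
have lc0 : lc < 0 by apply: ln_lt0; rewrite hc0 hc1.
have hmn : (0:R) < (m + n)%:R by rewrite ltr0n addn_gt0 hm.
have hm0 : (0:R) < m%:R by rewrite ltr0n.
have RcE : Rc = - lc / (m + n)%:R by rewrite /Rc lnV ?posrE // mulrC.
have Rc0 : 0 < Rc by rewrite RcE divr_gt0 // oppr_gt0.
set L := (n%:R - 1) / m%:R * Rc.
have hn1 : (1:R) <= n%:R by rewrite ler1n.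
have L0 : 0 <= L by rewrite /L mulr_ge0 // ?divr_ge0 ?subr_ge0 // ltW.
have BE : c `^ ((m + n - 1)%:R / (m * (m + n))%:R) = expR (- (Rc + L)).
  rewrite /powR gt_eqF //; congr expR.
  rewrite /L RcE natrB ?addn_gt0 ?hm // natrM natrD.
  rewrite -/lc; field; by rewrite -natrD (lt0r_neq0 hmn) (lt0r_neq0 hm0).
have E1 : c `^ ((m + n)%:R^-1) = expR (- Rc).
  by rewrite /powR gt_eqF // RcE -/lc mulNr opprK mulrC.
rewrite BE in hd.
have [v [v0 hv]] := @delta_small _ _ _ Y _ _ hm hd.
have B1 : expR (- (Rc + L)) <= 1 by apply: ltW; rewrite expR_lt1; lra.
have [j0 hj0] : exists j0, v (rshift m j0) 0 != 0.
  apply: (@q_nonzero _ _ _ Y a _ v _ v0 hv) => i; apply: le_trans B1 _.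
  by rewrite -expR0 ler_expR; have := ha i; lra.
have expbound : forall (x w y : R), 1 <= y -> expR x * y < expR w -> x < w.
  move=> x w y y1 h; rewrite -ltr_expR; apply: le_lt_trans h.
  by rewrite ler_peMr // ltW // expR_gt0.
have hj0a : a 0 (rshift m j0) < - Rc.
  have := hv (rshift m j0); rewrite zv_r => /(expbound _ _ _ (int_ge1 _ _ hj0)).
  lra.
exists (row_mx (\row_i (a 0 (lshift n i) + L))
          (\row_j (a 0 (rshift m j) - Rc + (if j == j0 then Rc else 0)))).
split; first split.
- rewrite (eq_bigr (fun i => a 0 (lshift n i) + L)); last by move=> i _; rewrite row_mxEl mxE.
  rewrite big_split /= sa sumr_const card_ord -mulr_natl /L RcE -/lc.
  by field; rewrite -natrD (lt0r_neq0 hmn) (lt0r_neq0 hm0).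
- rewrite (eq_bigr (fun j => (a 0 (rshift m j) + - Rc) + (if j == j0 then Rc else 0)));
    last by move=> j _; rewrite row_mxEr mxE.
  rewrite !big_split /= sq sumr_const card_ord -big_mkcond big_pred1_eq -mulr_natl RcE -/lc.
  by field; rewrite -natrD (lt0r_neq0 hmn).
- by move=> i; rewrite row_mxEl mxE; have := ha i; lra.
- move=> j; rewrite row_mxEr mxE; case: eqP => [->|_]; first lra.
  by have := hq j; lra.
rewrite E1; apply: (@small_delta _ _ _ Y _ _ v) => //; first exact: expR_gt0.
move=> k; rewrite -(fintype.splitK k); case: (fintype.split k) => [i|j] /=.
- rewrite row_mxEl mxE expRD -mulrA.
  have -> : expR (- Rc) = expR L * expR (- (Rc + L)) by rewrite -expRD; congr expR; ring.
  by rewrite mulrCA ltr_pM2l ?expR_gt0 //; exact: hv.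
- rewrite row_mxEr mxE; case: eqP => [->|_].
  + rewrite subrK; apply: lt_le_trans (hv (rshift m j0)) _.
    by rewrite ler_expR; lra.
  + rewrite addr0 expRD mulrAC.
    apply: lt_le_trans (_ : expR (- (Rc + L)) * expR (- Rc) <= _).
      by rewrite ltr_pM2r ?expR_gt0 //; exact: hv.
    by rewrite ler_piMl // ltW // expR_gt0.
Qed.

Theorem mainTheorem11 (R : realType) (m n : nat) (hm : (0 < m)%N) (hn : (0 < n)%N)
  (Y : 'M[R]_(m, n)) (c t : R) (hc0 : 0 < c) (hc1 : c < 1) (ht : 0 < t) :
  let Rc := (m + n)%:R^-1 * ln c^-1 in
  ((exists a, Ccone Rc t a /\ delta (expdiag a *m xYmat Y) < c `^ ((m + n)%:R^-1)) ->
     exists a', Ccone 0 t a' /\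
       delta (expdiag a' *m xYmat Y) < c `^ ((m * (m + n))%:R^-1))
  /\
  ((exists a, Ccone 0 t a /\
       delta (expdiag a *m xYmat Y) < c `^ ((m + n - 1)%:R / (m * (m + n))%:R)) ->
     exists a', Ccone Rc (t - (n%:R - 1) / (m + n)%:R * ln c) a' /\
       delta (expdiag a' *m xYmat Y) < c `^ ((m + n)%:R^-1)).
Proof.
move=> Rc; split.
- exact: (@partA R m n hm hn Y c t hc0 hc1 ht).
- exact: (@partB R m n hm hn Y c t hc0 hc1 ht).
Qed.
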